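(* Let $S$ be a semigroup and let $A$ be a skeleton of $S$. Then the subsemigroup $\langle A\rangle$ generated by $A$ is a regular subsemigroup of $S$.
   Context: For a nonempty set $X$ and a symbol $1\notin X$: elements of height $\ge 2$ are triples $g=(g^l,g^c,g^r)$; $\Gamma_0(X)=\{1\}$, $\Gamma_1(X)=X$, each $x\in X$ identified with $(1,x,1)$; for $i\ge 2$, $\Gamma_i(X)$ is the set of triples $g\in\Gamma_{i-1}(X)\times\Gamma_{i-2}(X)\times\Gamma_{i-1}(X)$ with $g^l\neq g^r$ and $g^c\in\{(g^l)^l,(g^l)^r\}\cap\{(g^r)^l,(g^r)^r\}$; $\Gamma(X)=\bigcup_{i\ge0}\Gamma_i(X)$. $S^1$ is $S$ with an identity adjoined if necessary; $E(\cdot)$ is the set of idempotents. For idempotents $e,f$ of a semigroup $R$, $S(e,f)=\{h\in E(R): fh=h=he,\ ehf=ef\}$. A skeleton mapping is a mapping $\phi:\Gamma(X)\to E(S^1)$ such that (i) $\phi|_X$ is one-to-one with $X\phi\subseteq E(S)$; (ii) $(1\phi)(g\phi)=g\phi=(g\phi)(1\phi)$ for all $g\in X$; (iii) $g\phi\in S\big((g^r\phi)(g^c\phi),(g^c\phi)(g^l\phi)\big)$ (in $S^1$) for all $g\in\Gamma_i(X)$, $i\ge2$. A skeleton of $S$ is a set of the form $(\Gamma(X)\setminus\{1\})\phi$ for some nonempty set $X$ and some skeleton mapping $\phi:\Gamma(X)\to E(S^1)$. *)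

(* Defs.v *)
Set Implicit Arguments.

(* S^1 : S with an identity adjoined; the adjoined identity is None. *)
Definition mul1 (T : Type) (op : T -> T -> T) (a b : option T) : option T :=
  match a, b with
  | None, _ => b
  | _, None => a
  | Some x, Some y => Some (op x y)
  end.

Definition idem1 (T : Type) (op : T -> T -> T) (e : option T) : Prop :=
  mul1 op e e = e.

Definition sandwich (T : Type) (op : T -> T -> T) (e f h : option T) : Prop :=
  idem1 op h /\ mul1 op f h = h /\ mul1 op h e = h /\
  mul1 op (mul1 op e h) f = mul1 op e f.

(* Elements of Gamma(X) are represented as trees: G1 is the symbol 1,
   Gx x is x in X (identified with the triple (1,x,1)), Gt l c r is a
   triple (l,c,r). *)
Inductive gam (X : Type) : Type :=
| G1 : gam X
| Gx : X -> gam X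
| Gt : gam X -> gam X -> gam X -> gam X.
Arguments G1 {X}.

Definition gl (X : Type) (g : gam X) : gam X :=
  match g with G1 => G1 | Gx _ => G1 | Gt l _ _ => l end.
Definition gc (X : Type) (g : gam X) : gam X :=
  match g with G1 => G1 | Gx x => Gx x | Gt _ c _ => c end.
Definition gr (X : Type) (g : gam X) : gam X :=
  match g with G1 => G1 | Gx _ => G1 | Gt _ _ r => r end.

Fixpoint inGamma (X : Type) (i : nat) (g : gam X) {struct i} : Prop :=
  match i with
  | 0 => g = G1
  | 1 => exists x, g = Gx x
  | S ((S i') as j) =>
      exists l c r, g = Gt l c r /\
        inGamma j l /\ inGamma i' c /\ inGamma j r /\
        l <> r /\
        (c = gl l \/ c = gr l) /\ (c = gl r \/ c = gr r)
  end.

Definition Gamma (X : Type) (g : gam X) : Prop := exists i, inGamma i g.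

Definition skeleton_mapping (T : Type) (op : T -> T -> T) (X : Type)
    (phi : gam X -> option T) : Prop :=
  (forall g, Gamma g -> idem1 op (phi g)) /\
  (forall x y : X, phi (Gx x) = phi (Gx y) -> x = y) /\
  (forall x : X, exists s : T, phi (Gx x) = Some s /\ op s s = s) /\
  (forall x : X, mul1 op (phi G1) (phi (Gx x)) = phi (Gx x) /\
                 mul1 op (phi (Gx x)) (phi G1) = phi (Gx x)) /\
  (forall (i : nat) (g : gam X), 2 <= i -> inGamma i g ->
     sandwich op (mul1 op (phi (gr g)) (phi (gc g)))
                 (mul1 op (phi (gc g)) (phi (gl g))) (phi g)).

Definition is_skeleton (T : Type) (op : T -> T -> T) (A : T -> Prop) : Prop :=
  exists (X : Type) (phi : gam X -> option T),
    inhabited X /\ skeleton_mapping op phi /\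
    (forall g, Gamma g -> g <> G1 -> exists s, phi g = Some s /\ A s) /\
    (forall s, A s -> exists g, Gamma g /\ g <> G1 /\ phi g = Some s).

Inductive generated (T : Type) (op : T -> T -> T) (A : T -> Prop) : T -> Prop :=
| gen_base : forall a, A a -> generated op A a
| gen_op : forall a b, generated op A a -> generated op A b ->
           generated op A (op a b).

Definition regular_subsemigroup (T : Type) (op : T -> T -> T) (B : T -> Prop) : Prop :=
  (forall a b, B a -> B b -> B (op a b)) /\
  (forall a, B a -> exists x, B x /\ op (op a x) a = a).

(* Main.v *)
Require Import Defs.
From Stdlib Require Import Arith Lia Classical.

Section Sk.
Variable T : Type.
Variable op : T -> T -> T.
Hypothesis assoc : forall a b c : T, op a (op b c) = op (op a b) c.
Variable A : T -> Prop.
Variable X : Type.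
Variable phi : gam X -> option T.
Hypothesis Hidem : forall g, Gamma g -> idem1 op (phi g).
Hypothesis Hone : forall x : X, mul1 op (phi G1) (phi (Gx x)) = phi (Gx x) /\
                 mul1 op (phi (Gx x)) (phi G1) = phi (Gx x).
Hypothesis Hsand : forall (i : nat) (g : gam X), 2 <= i -> inGamma i g ->
     sandwich op (mul1 op (phi (gr g)) (phi (gc g)))
                 (mul1 op (phi (gc g)) (phi (gl g))) (phi g).
Hypothesis HA : forall g, Gamma g -> g <> G1 -> exists s, phi g = Some s /\ A s.

Implicit Types g s t u v : gam X.
Local Infix "**" := (mul1 op) (at level 40, left associativity).

Lemma massoc : forall a b c, a ** (b ** c) = a ** b ** c.
Proof. intros [a|] [b|] [c|]; simpl; try reflexivity. rewrite assoc; reflexivity. Qed.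
Lemma mNl : forall a, None ** a = a. Proof. intros [a|]; reflexivity. Qed.
Lemma mNr : forall a, a ** None = a. Proof. intros [a|]; reflexivity. Qed.

Lemma pre2 : forall a b c, a ** b = c -> forall p, p ** a ** b = p ** c.
Proof. intros. rewrite <- massoc, H. reflexivity. Qed.
Lemma pre3 : forall a b c d, a ** b ** c = d -> forall p, p ** a ** b ** c = p ** d.
Proof. intros. rewrite <- H, !massoc. reflexivity. Qed.
Lemma pre4 : forall a b c d e, a ** b ** c ** d = e -> forall p, p ** a ** b ** c ** d = p ** e.
Proof. intros. rewrite <- H, !massoc. reflexivity. Qed.
Lemma pre5 : forall a b c d e f, a ** b ** c ** d ** e = f -> forall p, p ** a ** b ** c ** d ** e = p ** f.
Proof. intros. rewrite <- H, !massoc. reflexivity. Qed.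

Ltac mn := repeat rewrite massoc.
Ltac mnh H := repeat rewrite massoc in H.

Definition InU (o : option T) := exists a, o = Some a /\ generated op A a.
Definition U1 (o : option T) := o = None \/ InU o.

Lemma InU_mul : forall x y, InU x -> InU y -> InU (x ** y).
Proof. intros x y [a [-> Ha]] [b [-> Hb]]. exists (op a b). split. reflexivity. constructor 2; auto. Qed.
Lemma InU_mul1 : forall x y, InU x -> U1 y -> InU (x ** y).
Proof. intros x y Hx [->|Hy]. rewrite mNr; auto. apply InU_mul; auto. Qed.
Lemma InU_mul2 : forall x y, U1 x -> InU y -> InU (x ** y).
Proof. intros x y [->|Hx] Hy. rewrite mNl; auto. apply InU_mul; auto. Qed.
Lemma U1_mul : forall x y, U1 x -> U1 y -> U1 (x ** y).
Proof. intros x y [->|Hx] Hy. rewrite mNl; auto. right. apply InU_mul1; auto. Qed.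
Lemma InU_U1 : forall x, InU x -> U1 x. Proof. intros; right; auto. Qed.

Lemma lvl_uniq : forall g i j, inGamma i g -> inGamma j g -> i = j.
Proof.
  induction g as [| x | l IHl c IHc r IHr]; intros i j Hi Hj.
  - destruct i as [|[|i]]; destruct j as [|[|j]]; simpl in *; try reflexivity;
    try (destruct Hi as [? Hi]; discriminate); try (destruct Hj as [? Hj]; discriminate);
    try (destruct Hi as [? [? [? [Hi _]]]]; discriminate);
    try (destruct Hj as [? [? [? [Hj _]]]]; discriminate).
  - destruct i as [|[|i]]; destruct j as [|[|j]]; simpl in *; try reflexivity;
    try discriminate;
    try (destruct Hi as [? [? [? [Hi _]]]]; discriminate);
    try (destruct Hj as [? [? [? [Hj _]]]]; discriminate).
  - destruct i as [|[|i]]; destruct j as [|[|j]]; try reflexivity;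
    try (simpl in Hi; try discriminate Hi; destruct Hi as [? Hi]; discriminate Hi);
    try (simpl in Hj; try discriminate Hj; destruct Hj as [? Hj]; discriminate Hj).
    destruct Hi as [l1 [c1 [r1 [E1 [Hl1 _]]]]]. destruct Hj as [l2 [c2 [r2 [E2 [Hl2 _]]]]].
    injection E1; intros; subst. injection E2; intros; subst.
    specialize (IHl _ _ Hl1 Hl2). congruence.
Qed.

Lemma lvl_ne1 : forall g i, inGamma (S i) g -> g <> G1.
Proof. intros g [|i] H; simpl in H. destruct H as [x ->]; discriminate.
  destruct H as [l [c [r [-> _]]]]; discriminate. Qed.

Lemma inG_Gamma : forall g i, inGamma i g -> Gamma g.
Proof. intros; exists i; auto. Qed.

Lemma phi_InU : forall g i, inGamma (S i) g -> InU (phi g).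
Proof. intros g i H. destruct (HA g (inG_Gamma _ _ H) (lvl_ne1 _ _ H)) as [s [E Hs]].
  exists s. split; auto. constructor 1; auto. Qed.

Lemma idem : forall g i, inGamma i g -> phi g ** phi g = phi g.
Proof. intros. apply (Hidem g). exists i; auto. Qed.

Lemma gt_inv : forall k g, inGamma (S (S k)) g -> exists l c r, g = Gt l c r /\
  inGamma (S k) l /\ inGamma k c /\ inGamma (S k) r /\ l <> r /\
  (c = gl l \/ c = gr l) /\ (c = gl r \/ c = gr r).
Proof. intros k g H. exact H. Qed.

Lemma gt_lvl : forall k g, inGamma (S (S k)) g ->
  inGamma (S k) (gl g) /\ inGamma k (gc g) /\ inGamma (S k) (gr g) /\
  (gc g = gl (gl g) \/ gc g = gr (gl g)) /\ (gc g = gl (gr g) \/ gc g = gr (gr g)).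
Proof. intros k g H. destruct (gt_inv _ _ H) as [l [c [r [-> [? [? [? [? [? ?]]]]]]]]].
  simpl. tauto. Qed.

Lemma lvl1_inv : forall g, inGamma 1 g -> exists x, g = Gx x.
Proof. intros g H; exact H. Qed.
Lemma lvl0_inv : forall g, inGamma 0 g -> g = G1.
Proof. intros g H; exact H. Qed.

Lemma one_r : forall g, inGamma 1 g -> phi g ** phi G1 = phi g.
Proof. intros g H. destruct (lvl1_inv _ H) as [x ->]. apply Hone. Qed.
Lemma one_l : forall g, inGamma 1 g -> phi G1 ** phi g = phi g.
Proof. intros g H. destruct (lvl1_inv _ H) as [x ->]. apply Hone. Qed.

Section SF.
Variable k : nat.
Variable g : gam X.
Hypothesis Hg : inGamma (S (S k)) g.

Let Hs := Hsand (S (S k)) g ltac:(lia) Hg.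

Lemma sF : phi (gc g) ** phi (gl g) ** phi g = phi g.
Proof. destruct Hs as [_ [H _]]. exact H. Qed.
Lemma sE : phi g ** phi (gr g) ** phi (gc g) = phi g.
Proof. destruct Hs as [_ [_ [H _]]]. rewrite <- massoc. exact H. Qed.
Lemma sM : phi (gr g) ** phi (gc g) ** phi g ** phi (gc g) ** phi (gl g)
         = phi (gr g) ** phi (gc g) ** phi (gc g) ** phi (gl g).
Proof. destruct Hs as [_ [_ [_ H]]]. mnh H. exact H. Qed.

Lemma cidem : phi (gc g) ** phi (gc g) = phi (gc g).
Proof. destruct (gt_lvl _ _ Hg) as [_ [H _]]. apply (idem _ _ H). Qed.
Lemma gidem : phi g ** phi g = phi g.
Proof. apply (idem _ _ Hg). Qed.

Lemma c1 : phi g ** phi (gc g) = phi g.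
Proof. rewrite <- sE at 1. rewrite <- massoc, cidem. apply sE. Qed.
Lemma c2 : phi (gc g) ** phi g = phi g.
Proof. rewrite <- sF at 1. mn. rewrite cidem. apply sF. Qed.

Lemma sM' : phi (gr g) ** phi (gc g) ** phi g ** phi (gl g)
         = phi (gr g) ** phi (gc g) ** phi (gl g).
Proof. pose proof sM as H. rewrite (pre2 _ _ _ cidem) in H. rewrite (pre2 _ _ _ c1) in H. exact H. Qed.

Lemma coreK : phi g ** phi (gr g) ** phi (gc g) ** phi (gl g) ** phi g = phi g.
Proof.
  transitivity (phi g ** (phi (gr g) ** phi (gc g) ** phi (gc g) ** phi (gl g)) ** phi g).
  { rewrite (pre2 _ _ _ cidem). mn. reflexivity. }
  rewrite <- sM. mn. rewrite sE. rewrite (pre3 _ _ _ _ sF). rewrite gidem. apply gidem.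
Qed.
End SF.

Lemma lemB : forall k g (d : gam X), inGamma (S k) g -> (d = gl g \/ d = gr g) -> phi g ** phi d ** phi g = phi g.
Proof.
  intros [|k] g d Hg Hd.
  - destruct (lvl1_inv _ Hg) as [x ->]. simpl in Hd. destruct Hd as [->| ->];
    rewrite (one_r _ Hg); apply (idem _ _ Hg).
  - destruct Hd as [->| ->].
    + rewrite <- (sE _ _ Hg) at 1. apply (coreK _ _ Hg).
    + rewrite <- (sF _ _ Hg) at 2. mn. apply (coreK _ _ Hg).
Qed.

Definition adj k (c t t' : gam X) := inGamma k c /\ (c = gl t \/ c = gr t) /\ (c = gl t' \/ c = gr t').

Inductive Ch (k : nat) : gam X -> gam X -> nat -> option T -> Prop :=
| ch1 : forall s, inGamma (S k) s -> Ch k s s 0 (phi s)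
| chS : forall s t n w c t', Ch k s t n w -> inGamma (S k) t' -> t <> t' -> adj k c t t' ->
        Ch k s t' (S n) (w ** phi c ** phi t').

Lemma ch_lvl : forall k s t n w, Ch k s t n w -> inGamma (S k) s /\ inGamma (S k) t.
Proof. intros k s t n w H; induction H; tauto. Qed.

Lemma ch_start : forall k s t n w, Ch k s t n w -> phi s ** w = w.
Proof. intros k s t n w H; induction H. apply (idem _ _ H). mn. rewrite IHCh. reflexivity. Qed.

Lemma ch_end : forall k s t n w, Ch k s t n w -> w ** phi t = w.
Proof. intros k s t n w H; induction H. apply (idem _ _ H). rewrite <- massoc, (idem _ _ H0). reflexivity. Qed.

Lemma ch_end_p : forall k s t n w, Ch k s t n w -> forall p, p ** w ** phi t = p ** w.
Proof. intros. apply pre2. eapply ch_end; eauto. Qed.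

Lemma ch_InU : forall k s t n w, Ch k s t n w -> InU w.
Proof.
  intros k s t n w H; induction H.
  - eapply phi_InU; eauto.
  - destruct H2 as [Hc _]. destruct k as [|k].
    + rewrite (lvl0_inv _ Hc). rewrite <- (ch_end _ _ _ _ _ H) at 1.
      rewrite <- (massoc _ (phi t)), (one_r _ (proj2 (ch_lvl _ _ _ _ _ H))), (ch_end _ _ _ _ _ H).
      apply InU_mul; auto. eapply phi_InU; eauto.
    + apply InU_mul; [apply InU_mul|]; auto; eapply phi_InU; eauto.
Qed.

Lemma ch0_inv : forall k s t w, Ch k s t 0 w -> t = s /\ w = phi s.
Proof. intros k s t w H. inversion H; subst; auto. Qed.

Lemma ch_cat : forall k t u n' w', Ch k t u n' w' -> forall s n w, Ch k s t n w ->
  exists n2 w2, Ch k s u n2 w2 /\ w ** w' = w2.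
Proof.
  intros k t u n' w' H; induction H; intros s0 n0 w0 Hh0.
  - exists n0, w0. split; auto. apply (ch_end _ _ _ _ _ Hh0).
  - destruct (IHCh _ _ _ Hh0) as [n2 [w2 [Hc Hw]]].
    exists (S n2), (w2 ** phi c ** phi t'). split. econstructor; eauto.
    mn. rewrite Hw. reflexivity.
Qed.

Lemma ch_snoc : forall k s P n D c v, Ch k s P n D -> inGamma (S k) v -> adj k c P v ->
  exists n' D', Ch k s v n' D' /\ D ** phi c ** phi v = D'.
Proof.
  intros k s P n D c v H Hv Ha.
  destruct (classic (P = v)) as [<-|Hne].
  - exists n, D. split; auto.
    rewrite <- (ch_end _ _ _ _ _ H) at 1. mn.
    rewrite (pre3 _ _ _ _ (lemB k P c (proj2 (ch_lvl _ _ _ _ _ H)) (proj1 (proj2 Ha)))).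
    apply (ch_end _ _ _ _ _ H).
  - exists (S n), (D ** phi c ** phi v). split; auto. econstructor; eauto.
Qed.

Lemma Gt_lvl : forall k c t t', inGamma (S k) t -> inGamma (S k) t' -> t <> t' -> adj k c t t' ->
  inGamma (S (S k)) (Gt t' c t).
Proof. intros k c t t' Ht Ht' Hne [Hc [H1 H2]]. exists t', c, t. repeat split; auto. Qed.

Lemma lift : forall k s t n w, Ch k s t n w -> forall n', n = S n' ->
  exists G1 Gl w', Ch (S k) G1 Gl n' w' /\ gr G1 = s /\ gl Gl = t /\
    w = phi s ** phi (gc G1) ** w' ** phi (gc Gl) ** phi t.
Proof.
  intros k s t n w H; induction H; intros n' Hn; [discriminate|].
  injection Hn; intros ->. clear Hn.
  assert (HG : inGamma (S (S k)) (Gt t' c t)) by (apply Gt_lvl; auto; apply (ch_lvl _ _ _ _ _ H)).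
  destruct n' as [|n1].
  - destruct (ch0_inv _ _ _ _ H) as [-> ->].
    exists (Gt t' c s), (Gt t' c s), (phi (Gt t' c s)). split; [|split; [|split]]; auto.
    + constructor; auto.
    + cbn [gc gr gl]. pose proof (sM' _ _ HG) as HM. cbn [gc gr gl] in HM.
      pose proof (c1 _ _ HG) as HC. cbn [gc] in HC.
      rewrite (pre2 _ _ _ HC). rewrite HM. reflexivity.
  - destruct (IHCh n1 eq_refl) as [G1 [Gl [w0' [Hc [Hr [Hl Hw]]]]]].
    subst w.
    assert (HGl : inGamma (S (S k)) Gl) by apply (ch_lvl _ _ _ _ _ Hc).
    assert (Hne : Gl <> Gt t' c t) by (intro E; subst Gl; simpl in Hl; auto).
    assert (Had : adj (S k) t Gl (Gt t' c t)).
    { split; [apply (ch_lvl _ _ _ _ _ H)|]. split; [left; auto|right; reflexivity]. }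
    exists G1, (Gt t' c t), (w0' ** phi t ** phi (Gt t' c t)). split; [|split; [|split]]; auto.
    + econstructor; eauto.
    + cbn [gc gl].
      assert (E1 : w0' ** phi (gc Gl) = w0').
      { rewrite <- (ch_end _ _ _ _ _ Hc). rewrite <- massoc, (c1 _ _ HGl). reflexivity. }
      rewrite (pre2 _ _ _ E1).
      pose proof (sM' _ _ HG) as HM. cbn [gc gr gl] in HM.
      pose proof (c1 _ _ HG) as HC. cbn [gc] in HC.
      pose proof (c2 _ _ HG) as HC2. cbn [gc] in HC2.
      mn. rewrite <- HC2. mn. rewrite (pre2 _ _ _ HC). rewrite (pre4 _ _ _ _ _ HM). mn. reflexivity.
Qed.

Lemma ch_reg : forall n k s t w, Ch k s t n w -> exists q, InU q /\ w ** q ** w = w.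
Proof.
  induction n as [|n IH]; intros k s t w H.
  - destruct (ch0_inv _ _ _ _ H) as [-> ->]. exists (phi s). split.
    eapply phi_InU; apply (ch_lvl _ _ _ _ _ H). rewrite !(idem _ _ (proj1 (ch_lvl _ _ _ _ _ H))). reflexivity.
  - destruct (lift _ _ _ _ _ H n eq_refl) as [G1 [Gl [w' [Hc [Hr [Hl Hw]]]]]].
    destruct (IH _ _ _ _ Hc) as [q' [Hq' Hq]].
    destruct (ch_lvl _ _ _ _ _ Hc) as [HG1 HGl].
    exists (phi Gl ** q' ** phi G1). split.
    { apply InU_mul; [apply InU_mul|]; auto; eapply phi_InU; eauto. }
    subst w. mn.
    pose proof (sF _ _ HGl) as HF. rewrite Hl in HF.
    pose proof (sE _ _ HG1) as HE. rewrite Hr in HE.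
    rewrite (pre3 _ _ _ _ HF).
    rewrite (ch_end_p _ _ _ _ _ Hc).
    rewrite (pre3 _ _ _ _ HE).
    assert (E2 : forall p, p ** phi G1 ** w' = p ** w').
    { intro p. apply pre2. apply (ch_start _ _ _ _ _ Hc). }
    rewrite E2. rewrite <- (massoc _ w' q'), <- (massoc _ (w' ** q') w'), Hq. reflexivity.
Qed.

Inductive Sp (Tt : gam X) (k : nat) : gam X -> nat -> option T -> Prop :=
| sp0 : inGamma (S k) Tt -> Sp Tt k Tt k None
| spS : forall e b sg e', Sp Tt k e (S b) sg -> inGamma (S b) e' -> (e' = gl e \/ e' = gr e) ->
        Sp Tt k e' b (sg ** phi e').

Lemma sp_le : forall Tt k e b sg, Sp Tt k e b sg -> b <= k.
Proof. intros Tt k e b sg H; induction H; lia. Qed.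
Lemma sp_lvl : forall Tt k e b sg, Sp Tt k e b sg -> inGamma (S b) e /\ inGamma (S k) Tt.
Proof. intros Tt k e b sg H; induction H; tauto. Qed.
Lemma sp_end : forall Tt k e b sg, Sp Tt k e b sg -> phi Tt ** sg ** phi e = phi Tt ** sg.
Proof. intros Tt k e b sg H; destruct H.
  - rewrite !mNr. apply (idem _ _ H).
  - mn. rewrite (pre2 _ _ _ (idem _ _ H0)). reflexivity. Qed.
Lemma sp_ret : forall Tt k e b sg, Sp Tt k e b sg -> exists h, InU h /\ phi Tt ** sg ** h = phi Tt.
Proof. intros Tt k e b sg H; induction H.
  - exists (phi Tt). split. eapply phi_InU; eauto. rewrite mNr. apply (idem _ _ H).
  - destruct IHSp as [h [Hh E]]. exists (phi e ** h). split.
    apply InU_mul; auto. eapply phi_InU; apply (sp_lvl _ _ _ _ _ H).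
    mn. rewrite <- (sp_end _ _ _ _ _ H). mn.
    rewrite (pre3 _ _ _ _ (lemB _ _ _ (proj1 (sp_lvl _ _ _ _ _ H)) H1)).
    rewrite (sp_end _ _ _ _ _ H). exact E. Qed.
Lemma sp_U1 : forall Tt k e b sg, Sp Tt k e b sg -> U1 sg.
Proof. intros Tt k e b sg H; induction H. left; auto. right. apply InU_mul2; auto.
  eapply phi_InU; eauto. Qed.
Lemma sp_cat : forall e b t c tau, Sp e b t c tau -> forall Tt k sg, Sp Tt k e b sg ->
  exists rho, Sp Tt k t c rho /\ sg ** tau = rho.
Proof. intros e b t c tau H; induction H; intros Tt0 k0 sg0 H'.
  - exists sg0. split; auto. apply mNr.
  - destruct (IHSp _ _ _ H') as [rho [Hr E]]. exists (rho ** phi e'). split.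
    econstructor; eauto. rewrite <- E. mn. reflexivity. Qed.
Lemma sp_last : forall Tt k e b sg, Sp Tt k e b sg -> b < k ->
  exists e0 sg0, Sp Tt k e0 (S b) sg0 /\ (e = gl e0 \/ e = gr e0) /\ sg = sg0 ** phi e.
Proof. intros Tt k e b sg H Hb. destruct H. lia. eauto 7. Qed.
Lemma sp_refl : forall Tt k e sg, Sp Tt k e k sg -> e = Tt /\ sg = None.
Proof. intros Tt k e sg H. inversion H; subst; auto.
  apply sp_le in H0. lia. Qed.

Lemma cs_end : forall k s Tt n C e b sg, Ch k s Tt n C -> Sp Tt k e b sg -> C ** sg ** phi e = C ** sg.
Proof. intros k s Tt n C e b sg HC HS. rewrite <- (ch_end _ _ _ _ _ HC).
  rewrite (pre3 _ _ _ _ (sp_end _ _ _ _ _ HS)). mn. reflexivity. Qed.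

Lemma upbridge : forall b p e t n D, inGamma (S (S b)) p -> (e = gl p \/ e = gr p) -> Ch b e t n D ->
  exists n' P D', Ch (S b) p P n' D' /\ (t = gl P \/ t = gr P) /\ phi p ** D = D' ** phi t.
Proof.
  intros b p e t [|n] D Hp He HD.
  - destruct (ch0_inv _ _ _ _ HD) as [-> ->]. exists 0, p, (phi p). split. constructor; auto.
    split; auto.
  - destruct (lift _ _ _ _ _ HD n eq_refl) as [K0 [Kl [D0 [HD0 [Hr [Hl Hw]]]]]].
    destruct (ch_lvl _ _ _ _ _ HD0) as [HK0 HKl].
    assert (E1 : forall q, q ** phi (gc K0) ** D0 = q ** D0).
    { apply pre2. rewrite <- (ch_start _ _ _ _ _ HD0). rewrite massoc, (c2 _ _ HK0). reflexivity. }
    assert (E2 : forall q, q ** D0 ** phi (gc Kl) = q ** D0).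
    { apply pre2. rewrite <- (ch_end _ _ _ _ _ HD0). rewrite <- massoc, (c1 _ _ HKl). reflexivity. }
    assert (E3 : phi p ** D = phi p ** phi e ** D0 ** phi t).
    { rewrite Hw. mn. rewrite E1, E2. reflexivity. }
    rewrite E3.
    destruct (classic (p = K0)) as [<-|Hne].
    + exists n, Kl, D0. split; auto. split; auto.
      rewrite <- (ch_start _ _ _ _ _ HD0) at 1. mn.
      rewrite (lemB _ _ _ Hp (or_intror (eq_sym Hr))). rewrite (ch_start _ _ _ _ _ HD0). reflexivity.
    + assert (H1 : Ch (S b) p K0 1 (phi p ** phi e ** phi K0)).
      { econstructor. constructor; auto. auto. auto.
        split; [apply (ch_lvl _ _ _ _ _ HD)|]. split; auto. }
      destruct (ch_cat _ _ _ _ _ HD0 _ _ _ H1) as [n2 [D2 [HD2 E4]]].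
      exists n2, Kl, D2. split; auto. split; auto.
      rewrite <- E4. rewrite (pre2 _ _ _ (ch_start _ _ _ _ _ HD0)). reflexivity.
Qed.

Lemma absorb : forall Tt k e b sg, Sp Tt k e b sg -> forall s n C t n' D,
  Ch k s Tt n C -> Ch b e t n' D ->
  exists n2 T2 C2 sg2, Ch k s T2 n2 C2 /\ Sp T2 k t b sg2 /\ C ** sg ** D = C2 ** sg2.
Proof.
  intros Tt k e b sg H; induction H; intros s0 n0 C t n' D HC HD.
  - destruct (ch_cat _ _ _ _ _ HD _ _ _ HC) as [n2 [C2 [HC2 E]]].
    exists n2, t, C2, None. split; auto. split. constructor. apply (ch_lvl _ _ _ _ _ HD).
    rewrite !mNr. auto.
  - pose proof (proj1 (sp_lvl _ _ _ _ _ H)) as Hlv.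
    destruct (upbridge _ _ _ _ _ _ Hlv H1 HD) as [n3 [P [D' [HD' [Ht E]]]]].
    destruct (IHSp _ _ _ _ _ _ HC HD') as [n2 [T2 [C2 [sg2 [HC2 [HS2 E2]]]]]].
    exists n2, T2, C2, (sg2 ** phi t). split; auto. split.
    econstructor; eauto. apply (ch_lvl _ _ _ _ _ HD).
    replace (C ** (sg ** phi e') ** D) with (C ** sg ** (phi e ** D)).
    { rewrite E. mn. rewrite E2. reflexivity. }
    rewrite <- (ch_start _ _ _ _ _ HD) at 1. mn. rewrite (cs_end _ _ _ _ _ _ _ _ HC H). reflexivity.
Qed.

Lemma lseq : forall k s Tt n C e b sg t, Ch k s Tt n C -> Sp Tt k e b sg -> b < k ->
  inGamma (S (S b)) t -> (e = gl t \/ e = gr t) ->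
  exists n2 T2 C2 sg2, Ch k s T2 n2 C2 /\ Sp T2 k t (S b) sg2 /\ C ** sg ** phi t = C2 ** sg2.
Proof.
  intros k s Tt n C e b sg t HC HS Hb Ht He.
  destruct (sp_last _ _ _ _ _ HS Hb) as [e0 [sg0 [HS0 [He0 ->]]]].
  assert (Hl0 : inGamma (S (S b)) e0) by apply (sp_lvl _ _ _ _ _ HS0).
  destruct (ch_snoc (S b) e0 e0 0 (phi e0) e t (ch1 _ _ Hl0) Ht) as [n' [D [HD ED]]].
  { split. apply (sp_lvl _ _ _ _ _ HS). auto. }
  destruct (absorb _ _ _ _ _ HS0 _ _ _ _ _ _ HC HD) as [n2 [T2 [C2 [sg2 [HC2 [HS2 E2]]]]]].
  exists n2, T2, C2, sg2. split; auto. split; auto.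
  rewrite <- E2, <- ED. mn. rewrite (cs_end _ _ _ _ _ _ _ _ HC HS0). reflexivity.
Qed.

Lemma conn0 : forall u v, inGamma 1 u -> inGamma 1 v -> exists n C, Ch 0 u v n C /\ phi u ** phi v = C.
Proof.
  intros u v Hu Hv. destruct (classic (u = v)) as [<-|Hne].
  - exists 0, (phi u). split. constructor; auto. apply (idem _ _ Hu).
  - exists 1, (phi u ** phi G1 ** phi v). split.
    + econstructor. constructor; auto. auto. auto.
      destruct (lvl1_inv _ Hu) as [x ->]. destruct (lvl1_inv _ Hv) as [y ->].
      split. reflexivity. simpl; auto.
    + rewrite (one_r _ Hu). reflexivity.
Qed.

Lemma lvl2_r : forall u, inGamma 2 u -> phi u ** phi (gr u) = phi u.
Proof. intros u Hu. pose proof (sE 0 u Hu) as E. destruct (gt_lvl _ _ Hu) as [_ [Hc [Hr _]]].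
  rewrite (lvl0_inv _ Hc) in E. rewrite <- massoc, (one_r _ Hr) in E. exact E. Qed.
Lemma lvl2_l : forall u, inGamma 2 u -> phi (gl u) ** phi u = phi u.
Proof. intros u Hu. pose proof (sF 0 u Hu) as E. destruct (gt_lvl _ _ Hu) as [Hl [Hc _]].
  rewrite (lvl0_inv _ Hc) in E. rewrite (one_l _ Hl) in E. exact E. Qed.

Definition LinkP a := forall u v, inGamma (S a) u -> inGamma 1 v ->
  exists n Tt C sg, Ch a u Tt n C /\ Sp Tt a v 0 sg /\ phi u ** phi v = C ** sg.

Lemma link0 : forall a, LinkP a /\ LinkP (S a).
Proof.
  induction a as [|a [IH1 IH2]].
  - split.
    + intros u v Hu Hv. destruct (conn0 _ _ Hu Hv) as [n [C [HC E]]].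
      exists n, v, C, None. split; auto. split. constructor; auto. rewrite mNr; auto.
    + intros u v Hu Hv.
      destruct (gt_lvl _ _ Hu) as [Hl [Hc [Hr [_ Hcr]]]].
      destruct (conn0 _ _ Hr Hv) as [n [D [HD E]]].
      destruct (upbridge 0 u (gr u) v n D Hu (or_intror eq_refl) HD) as [n' [P [D' [HD' [HvP E']]]]].
      exists n', P, D', (None ** phi v). split; auto. split.
      econstructor. constructor. apply (ch_lvl _ _ _ _ _ HD'). auto. auto.
      rewrite mNl, <- E'. rewrite <- E. rewrite massoc, (lvl2_r _ Hu). reflexivity.
  - split; auto.
    intros u v Hu Hv.
    destruct (gt_lvl _ _ Hu) as [Hl [Hc [Hr [_ Hcr]]]].
    destruct (IH1 _ _ Hc Hv) as [n0 [T0 [C0 [sg0 [HC0 [HS0 E0]]]]]].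
    destruct (upbridge _ (gr u) (gc u) T0 n0 C0 Hr Hcr HC0) as [n1 [P1 [C1 [HC1 [HT0 E1]]]]].
    destruct (upbridge _ u (gr u) P1 n1 C1 Hu (or_intror eq_refl) HC1) as [n2 [P2 [C2 [HC2 [HP1 E2]]]]].
    assert (HS : Sp P2 (S (S a)) T0 a (None ** phi P1 ** phi T0)).
    { econstructor. econstructor. constructor. apply (ch_lvl _ _ _ _ _ HC2).
      apply (ch_lvl _ _ _ _ _ HC1). auto. apply (ch_lvl _ _ _ _ _ HC0). auto. }
    destruct (sp_cat _ _ _ _ _ HS0 _ _ _ HS) as [rho [Hrho Erho]].
    exists n2, P2, C2, rho. split; auto. split; auto.
    rewrite <- Erho. rewrite <- (sE _ _ Hu) at 1. mn.
    rewrite (pre2 _ _ _ E0). mn. rewrite (pre2 _ _ _ E1). mn. rewrite E2. mn. rewrite ?mNr. reflexivity.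
Qed.

Definition Lrel x y := exists a b, U1 a /\ U1 b /\ x = a ** y /\ y = b ** x.
Lemma Lrel_eq : forall x y, x = y -> Lrel x y.
Proof. intros x y ->. exists None, None. repeat split; try (left; reflexivity); rewrite mNl; auto. Qed.
Lemma Lrel_trans : forall x y z, Lrel x y -> Lrel y z -> Lrel x z.
Proof. intros x y z [a1 [b1 [Ha1 [Hb1 [E1 F1]]]]] [a2 [b2 [Ha2 [Hb2 [E2 F2]]]]].
  exists (a1 ** a2), (b2 ** b1). repeat split; try apply U1_mul; auto.
  rewrite E1, E2. mn; reflexivity. rewrite F2, F1. mn; reflexivity. Qed.
Lemma Lrel_r : forall x y z, Lrel x y -> Lrel (x ** z) (y ** z).
Proof. intros x y z [a [b [Ha [Hb [E F]]]]]. exists a, b. repeat split; auto.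
  rewrite E; mn; reflexivity. rewrite F; mn; reflexivity. Qed.

Definition NFe w e := exists k s Tt n C b sg, Ch k s Tt n C /\ Sp Tt k e b sg /\ w = C ** sg.

Lemma ls : forall j0 t w1, inGamma (S (S j0)) t -> NFe w1 (gl t) ->
  exists w2, Lrel (w1 ** phi t) w2 /\ NFe w2 t.
Proof.
  intros j0 t w1 Ht [k [s [Tt [n [C [b [sg [HC [HS ->]]]]]]]]].
  destruct (gt_lvl _ _ Ht) as [Hl [Hc [Hr _]]].
  assert (Eb : b = j0) by (pose proof (lvl_uniq _ _ _ Hl (proj1 (sp_lvl _ _ _ _ _ HS))); lia).
  subst b.
  pose proof (sp_le _ _ _ _ _ HS) as Hle.
  destruct (Nat.eq_dec j0 k) as [<-|Hne].
  - destruct (sp_refl _ _ _ _ HS) as [HTt ->]. subst Tt.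
    destruct n as [|n].
    + destruct (ch0_inv _ _ _ _ HC) as [Hs ->]. subst s.
      exists (phi t). split.
      * exists (phi (gl t)), (phi t). split; [right; eapply phi_InU; eauto|].
        split; [right; eapply phi_InU; eauto|]. rewrite mNr. split; auto.
        rewrite massoc. rewrite (lemB _ _ _ Ht (or_introl eq_refl)). reflexivity.
      * exists (S j0), t, t, 0, (phi t), (S j0), None. split. constructor; auto.
        split. constructor; auto. rewrite mNr; auto.
    + destruct (lift _ _ _ _ _ HC n eq_refl) as [G1 [Gl [C' [HC' [Hr1 [Hl1 Hw]]]]]].
      destruct (ch_lvl _ _ _ _ _ HC') as [HG1 HGl].
      destruct (ch_snoc (S j0) G1 Gl n C' (gl t) t HC' Ht) as [n'' [C'' [HC'' E'']]].
      { split; [auto|]. split; [left; congruence|left; reflexivity]. }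
      exists C''. split.
      * exists (phi s), (phi G1). split; [right; eapply phi_InU; apply (ch_lvl _ _ _ _ _ HC)|].
        split; [right; eapply phi_InU; eauto|].
        assert (F1 : C' ** phi (gc Gl) = C').
        { rewrite <- (ch_end _ _ _ _ _ HC'). rewrite <- massoc, (c1 _ _ HGl). reflexivity. }
        assert (F2 : phi (gc G1) ** C'' = C'').
        { rewrite <- (ch_start _ _ _ _ _ HC''). rewrite massoc, (c2 _ _ HG1). reflexivity. }
        assert (EW : C ** None ** phi t = phi s ** C'').
        { rewrite mNr, Hw. mn. rewrite (pre2 _ _ _ F1). rewrite (pre3 _ _ _ _ E'').
          rewrite <- massoc, F2. reflexivity. }
        split. exact EW. rewrite EW.
        rewrite <- F2 at 2. mn. pose proof (sE _ _ HG1) as HE. rewrite Hr1 in HE. rewrite HE.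
        symmetry. apply (ch_start _ _ _ _ _ HC'').
      * exists (S j0), G1, t, n'', C'', (S j0), None. split; auto. split. constructor; auto.
        rewrite mNr; auto.
  - destruct (lseq _ _ _ _ _ _ _ _ t HC HS ltac:(lia) Ht (or_introl eq_refl)) as
      [n2 [T2 [C2 [sg2 [HC2 [HS2 E2]]]]]].
    exists (C2 ** sg2). split. apply Lrel_eq. auto.
    exists k, s, T2, n2, C2, (S j0), sg2. auto.
Qed.

Definition MainP j := forall t, inGamma (S j) t -> forall w e, NFe w e ->
  exists w', Lrel (w ** phi t) w' /\ NFe w' t.

Lemma mainstep : forall j, MainP j /\ MainP (S j).
Proof.
  assert (P0 : MainP 0).
  { intros t Ht w e [k [s [Tt [n [C [b [sg [HC [HS ->]]]]]]]]].
    destruct (proj1 (link0 b) e t (proj1 (sp_lvl _ _ _ _ _ HS)) Ht) as [n1 [T1 [C1 [sg1 [HC1 [HS1 E1]]]]]].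
    destruct (absorb _ _ _ _ _ HS _ _ _ _ _ _ HC HC1) as [n2 [T2 [C2 [sg2 [HC2 [HS2 E2]]]]]].
    destruct (sp_cat _ _ _ _ _ HS1 _ _ _ HS2) as [rho [Hrho Erho]].
    exists (C2 ** rho). split.
    - apply Lrel_eq. rewrite <- (cs_end _ _ _ _ _ _ _ _ HC HS). rewrite <- massoc, E1. mn.
      rewrite E2, <- Erho. mn. reflexivity.
    - exists k, s, T2, n2, C2, 0, rho. auto. }
  assert (Step : forall j, MainP j -> MainP (S j) -> MainP (S (S j))).
  { intros j IH1 IH2 t Ht w e Hw.
    destruct (gt_lvl _ _ Ht) as [Hl [Hc [Hr _]]].
    destruct (IH1 _ Hc _ _ Hw) as [w1 [L1 N1]].
    destruct (IH2 _ Hl _ _ N1) as [w2 [L2 N2]].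
    destruct (ls _ _ _ Ht N2) as [w3 [L3 N3]].
    exists w3. split; auto.
    rewrite <- (sF _ _ Ht). mn.
    eapply Lrel_trans. apply Lrel_r. apply Lrel_r. exact L1.
    eapply Lrel_trans. apply Lrel_r. exact L2. exact L3. }
  assert (P1 : MainP 1).
  { intros t Ht w e Hw.
    destruct (gt_lvl _ _ Ht) as [Hl [Hc [Hr _]]].
    destruct (P0 _ Hl _ _ Hw) as [w2 [L2 N2]].
    destruct (ls _ _ _ Ht N2) as [w3 [L3 N3]].
    exists w3. split; auto.
    rewrite <- (lvl2_l _ Ht). rewrite massoc.
    eapply Lrel_trans. apply Lrel_r. exact L2. exact L3. }
  induction j as [|j [IH1 IH2]]. split; auto. split; auto.
Qed.

Hypothesis HA' : forall (a0 : T), A a0 -> exists g, Gamma g /\ g <> G1 /\ phi g = Some a0.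

Definition Qp x := exists w e, Lrel x w /\ NFe w e.

Lemma Q_base : forall a, A a -> Qp (Some a).
Proof.
  intros a Ha. destruct (HA' a Ha) as [g [[i Hi] [Hne E]]].
  destruct i as [|i]. { exfalso. apply Hne. exact Hi. }
  exists (phi g), g. split. apply Lrel_eq; auto.
  exists i, g, g, 0, (phi g), i, None. split. constructor; auto. split. constructor; auto.
  rewrite mNr; auto.
Qed.

Lemma Q_step : forall x a, Qp x -> A a -> Qp (x ** Some a).
Proof.
  intros x a [w [e [L N]]] Ha. destruct (HA' a Ha) as [g [[i Hi] [Hne E]]].
  destruct i as [|i]. { exfalso. apply Hne. exact Hi. }
  destruct (proj1 (mainstep i) g Hi w e N) as [w' [L' N']].
  exists w', g. split; auto. rewrite <- E. eapply Lrel_trans. apply Lrel_r. exact L. exact L'.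
Qed.

Lemma Q_mul : forall b, generated op A b -> forall x, Qp x -> Qp (x ** Some b).
Proof.
  intros b H; induction H; intros x Hx.
  - apply Q_step; auto.
  - change (Some (op a b)) with (Some a ** Some b). rewrite massoc. auto.
Qed.

Lemma Q_all : forall a, generated op A a -> Qp (Some a).
Proof.
  intros a H; induction H.
  - apply Q_base; auto.
  - change (Some (op a b)) with (Some a ** Some b). apply Q_mul; auto.
Qed.

Lemma Q_reg : forall x, Qp x -> exists y, InU y /\ x ** y ** x = x.
Proof.
  intros x [w [e [[al [be [Hal [Hbe [E F]]]]] [k [s [Tt [n [C [b [sg [HC [HS ->]]]]]]]]]]]].
  destruct (ch_reg _ _ _ _ _ HC) as [q [Hq Eq]].
  destruct (sp_ret _ _ _ _ _ HS) as [h [Hh Eh]].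
  exists (h ** q ** be). split.
  { apply InU_mul1; auto. apply InU_mul; auto. }
  assert (E1 : C ** sg ** h = C).
  { rewrite <- (ch_end _ _ _ _ _ HC). rewrite (pre3 _ _ _ _ Eh). reflexivity. }
  mn. rewrite (pre2 _ _ _ (eq_sym F)).
  rewrite E at 1. mn. rewrite (pre3 _ _ _ _ E1).
  rewrite (pre3 _ _ _ _ Eq). rewrite E. mn. reflexivity.
Qed.

Lemma all_reg : forall a, generated op A a -> exists b, generated op A b /\ op (op a b) a = a.
Proof.
  intros a Ha. destruct (Q_reg _ (Q_all _ Ha)) as [y [[b [-> Hb]] E]].
  exists b. split; auto. simpl in E. injection E. auto.
Qed.

End Sk.

Theorem corollary5p2 (T : Type) (op : T -> T -> T)
  (assoc : forall a b c : T, op a (op b c) = op (op a b) c)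
  (A : T -> Prop) (hA : is_skeleton op A) :
  regular_subsemigroup op (generated op A).
Proof.
  destruct hA as [X [phi [Hinh [[Hid [Hinj [Hsome [Hone' Hsand']]]] [HA1 HA2]]]]].
  split.
  - intros a b Ha Hb. constructor 2; auto.
  - intros a Ha. eapply all_reg; eauto.
Qed.
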